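(* Let $F$ be a field and $T_3$ the ring of lower triangular $3\times3$ matrices over $F$. Two pairs $(x,y),(w,z)\in T_3^2$ each generating a free cyclic submodule lie in the same $GL_2(T_3)$-orbit (under right multiplication) if and only if the right ideals $xT_3+yT_3$ and $wT_3+zT_3$ coincide.
   Context: Rings are associative with identity. $T_3^2$ is the free left $T_3$-module of pairs; for $(a,b)$, $T_3(a,b)=\{(\alpha a,\alpha b):\alpha\in T_3\}$ is free if $r(a,b)=(0,0)$ implies $r=0$. $GL_2(T_3)$ acts on pairs by right multiplication of the row vector $(a,b)$ by an invertible $2\times2$ matrix over $T_3$. *)

(* Defs.v *)
From HB Require Import structures.
From mathcomp Require Import all_boot all_order all_algebra.
Set Implicit Arguments. Unset Strict Implicit. Unset Printing Implicit Defensive.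
Import GRing.Theory.
Local Open Scope ring_scope.

(* T_3: lower triangular 3x3 matrices over F, as a subset of the ring 'M[F]_3.
   is_trig_mx A <=> forall i j, i < j -> A i j = 0 (lower triangular). *)
Definition inT3 (F : fieldType) (A : 'M[F]_3) : bool := is_trig_mx A.

Definition pairrow (F : fieldType) (a b : 'M[F]_3) : 'rV['M[F]_3]_2 :=
  \row_(j < 2) (if j == ord0 then a else b).

Definition free_pair (F : fieldType) (a b : 'M[F]_3) : Prop :=
  forall r : 'M[F]_3, inT3 r -> r * a = 0 -> r * b = 0 -> r = 0.

Definition matT3 (F : fieldType) (P : 'M['M[F]_3]_2) : Prop :=
  forall i j, inT3 (P i j).

Definition inGL2T3 (F : fieldType) (P : 'M['M[F]_3]_2) : Prop :=
  matT3 P /\ exists Q : 'M['M[F]_3]_2, matT3 Q /\ P *m Q = 1%:M /\ Q *m P = 1%:M.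

Definition same_orbit (F : fieldType) (a b c d : 'M[F]_3) : Prop :=
  exists P, inGL2T3 P /\ pairrow a b *m P = pairrow c d.

Definition in_rideal (F : fieldType) (a b m : 'M[F]_3) : Prop :=
  exists s t : 'M[F]_3, inT3 s /\ inT3 t /\ m = a * s + b * t.

(* Main.v *)
Require Import Defs.
From HB Require Import structures.
From mathcomp Require Import all_boot all_order all_algebra.
Import GRing.Theory.
From mathcomp Require Import ring zify.
Local Open Scope ring_scope.


Lemma nil3R (Rg : pzRingType) (n : Rg) : n * n * n = 0 ->
  (1 + n) * (1 - n + n * n) = 1 /\ (1 - n + n * n) * (1 + n) = 1.
Proof.
move=> h; split.
  rewrite mulrDl mul1r !mulrDr mulrN mulr1 mulrA h ?addr0.
  by rewrite addrACA subrK subrr addr0.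
rewrite mulrDr mulr1 !mulrDl mul1r mulNr h ?addr0.
by rewrite addrACA subrK subrr addr0.
Qed.

Lemma det2 (F : fieldType) (M : 'M[F]_2) : \det M = M 0 0 * M 1 1 - M 0 1 * M 1 0.
Proof.
rewrite (expand_det_row _ 0) !big_ord_recl big_ord0 /cofactor !det_mx11 !mxE /=.
have e1 : lift 0 0 = 1 :> 'I_2 by apply/val_inj.
have e0 : ord0 = 0 :> 'I_2 by apply/val_inj.
have e3 : lift (lift ord0 ord0) 0 = 0 :> 'I_2 by apply/val_inj.
rewrite e1 ?e0 ?e2 ?e3 /= expr0 expr1 addr0 mul1r mulN1r mulrN.
by have -> : lift 1 0 = 0 :> 'I_2 by apply/val_inj.
Qed.

Definition Ymk (F : fieldType) (y00 y01 y10 y11 : F) : 'M[F]_2 :=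
  \matrix_(i, j) if i == 0 then (if j == 0 then y00 else y01)
                 else (if j == 0 then y10 else y11).

Arguments Ymk {F}.
Lemma sr1 (F : fieldType) (A B : 'M[F]_2) :
  exists Y, (A + (1 - A *m B) *m Y) \in unitmx.
Proof.
pose d Y := \det (A + (1 - A *m B) *m Y).
have E : (1 : F) = (B 0 0 * B 1 1 - B 1 0 * B 0 1) * d (Ymk 0 0 0 0)
   + B 0 0 * (d (Ymk 0 0 0 1) - d (Ymk 0 0 0 0))
   - B 1 0 * (d (Ymk 0 0 1 0) - d (Ymk 0 0 0 0))
   - B 0 1 * (d (Ymk 0 1 0 0) - d (Ymk 0 0 0 0))
   + B 1 1 * (d (Ymk 1 0 0 0) - d (Ymk 0 0 0 0))
   + (d (Ymk 1 0 0 1) - d (Ymk 0 0 0 0) - (d (Ymk 0 0 0 1) - d (Ymk 0 0 0 0))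
        - (d (Ymk 1 0 0 0) - d (Ymk 0 0 0 0))).
  have e1 : lift ord0 ord0 = 1 :> 'I_2 by apply/val_inj.
  have e0 : ord0 = 0 :> 'I_2 by apply/val_inj.
  rewrite /d !det2 !mxE !big_ord_recl !big_ord0 !mxE /= !big_ord_recl !big_ord0 ?e1 ?e0.
  ring.
have cs : forall Y, d Y = 0 \/ exists Y, (A + (1 - A *m B) *m Y) \in unitmx.
  move=> Y; case: (eqVneq (d Y) 0) => h; [by left | right; exists Y].
  by rewrite unitmxE unitfE.
case: (cs (Ymk 0 0 0 0)) => [h0|//]; case: (cs (Ymk 0 0 0 1)) => [h1|//];
case: (cs (Ymk 0 0 1 0)) => [h2|//]; case: (cs (Ymk 0 1 0 0)) => [h3|//];
case: (cs (Ymk 1 0 0 0)) => [h4|//]; case: (cs (Ymk 1 0 0 1)) => [h5|//].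
move: E; rewrite h0 h1 h2 h3 h4 h5 !(subr0, mulr0, addr0, sub0r, oppr0) => /eqP.
by rewrite oner_eq0.
Qed.


Section T3.
Variable F : fieldType.
Implicit Types X Y Z : 'M[F]_3.

Lemma inT3P X : inT3 X -> forall i j : 'I_3, (i < j)%N -> X i j = 0.
Proof. by move/is_trig_mxP. Qed.

Lemma inT3_add X Y : inT3 X -> inT3 Y -> inT3 (X + Y).
Proof.
move=> /is_trig_mxP hX /is_trig_mxP hY; apply/is_trig_mxP => i j h.
by rewrite mxE hX // hY // addr0.
Qed.

Lemma inT3_opp X : inT3 X -> inT3 (- X).
Proof.
move=> /is_trig_mxP hX; apply/is_trig_mxP => i j h.
by rewrite mxE hX // oppr0.
Qed.

Lemma inT3_mul X Y : inT3 X -> inT3 Y -> inT3 (X * Y).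
Proof.
move=> /is_trig_mxP hX /is_trig_mxP hY; apply/is_trig_mxP => i j h.
change (X * Y) with (X *m Y); rewrite mxE big1 // => l _.
case: (ltnP i l) => hl; first by rewrite hX // mul0r.
by rewrite hY ?mulr0 //; apply: (leq_ltn_trans hl h).
Qed.

Lemma inT3_1 : inT3 (1 : 'M[F]_3).
Proof. exact: scalar_mx_is_trig. Qed.

Lemma inT3_0 : inT3 (0 : 'M[F]_3).
Proof. exact: mx0_is_trig. Qed.

Lemma inT3_diag (r : 'rV[F]_3) : inT3 (diag_mx r).
Proof. exact: diag_mx_is_trig. Qed.

Lemma T3_mul_diag X Y k : inT3 X -> inT3 Y -> (X * Y) k k = X k k * Y k k.
Proof.
move=> /is_trig_mxP hX /is_trig_mxP hY.
change (X * Y) with (X *m Y); rewrite mxE (bigD1 k) //= big1 ?addr0 // => l hl.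
case: (ltnP k l) => h; first by rewrite hX // mul0r.
rewrite hY ?mulr0 //; rewrite ltn_neqAle h andbT.
by apply: contra hl => /eqP e; apply/eqP/val_inj.
Qed.

Definition sT3 X := forall i j : 'I_3, (i <= j)%N -> X i j = 0.

Lemma sT3_mul3 X Y Z : sT3 X -> sT3 Y -> sT3 Z -> X * Y * Z = 0.
Proof.
move=> hX hY hZ; apply/matrixP => i j.
change (X * Y * Z) with ((X *m Y) *m Z); rewrite !mxE big1 // => m _.
rewrite mxE big_distrl big1 //= => l _.
case: (leqP i l) => h1; first by rewrite hX // !mul0r.
case: (leqP l m) => h2; first by rewrite hY // mulr0 mul0r.
rewrite hZ ?mulr0 //.
have : (i < 3)%N := ltn_ord i.
lia.
Qed.

Implicit Types P Q N : 'M['M[F]_3]_2.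

Lemma matT3_add P Q : matT3 P -> matT3 Q -> matT3 (P + Q).
Proof. by move=> hP hQ i j; rewrite mxE; apply: inT3_add. Qed.

Lemma matT3_opp P : matT3 P -> matT3 (- P).
Proof. by move=> hP i j; rewrite mxE; apply: inT3_opp. Qed.

Lemma matT3_mul P Q : matT3 P -> matT3 Q -> matT3 (P *m Q).
Proof.
move=> hP hQ i j; rewrite mxE; apply: (big_ind (@inT3 F)).
- exact: inT3_0.
- exact: inT3_add.
- by move=> l _; apply: inT3_mul.
Qed.

Lemma matT3_1 : matT3 (1 : 'M['M[F]_3]_2).
Proof.
move=> i j; rewrite mxE; case: (i == j); first exact: inT3_1.
exact: inT3_0.
Qed.

Definition Dk (k : 'I_3) P : 'M[F]_2 := \matrix_(a, b) (P a b) k k.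

Lemma Dk_add k P Q : Dk k (P + Q) = Dk k P + Dk k Q.
Proof. by apply/matrixP => a b; rewrite !mxE. Qed.

Lemma Dk_opp k P : Dk k (- P) = - Dk k P.
Proof. by apply/matrixP => a b; rewrite !mxE. Qed.

Lemma Dk_1 k : Dk k 1 = 1.
Proof.
apply/matrixP => a b; rewrite !mxE; case: (a == b) => /=.
  by rewrite mxE eqxx.
by rewrite mxE.
Qed.

Lemma Dk_mul k P Q : matT3 P -> matT3 Q -> Dk k (P *m Q) = Dk k P *m Dk k Q.
Proof.
move=> hP hQ; apply/matrixP => a b; rewrite !mxE summxE.
by apply: eq_bigr => c _; rewrite T3_mul_diag // !mxE.
Qed.

Lemma sT3_of X : inT3 X -> (forall k, X k k = 0) -> sT3 X.
Proof.
move=> /is_trig_mxP hX hd i j; rewrite leq_eqVlt => /orP [/eqP e|h].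
  by have -> : i = j by apply/val_inj. 
by rewrite hX.
Qed.

Lemma nil3 N : matT3 N -> (forall k, Dk k N = 0) -> N *m N *m N = 0.
Proof.
move=> hN hD.
have hs : forall a b, sT3 (N a b).
  move=> a b; apply: sT3_of => // k.
  by have := congr1 (fun M : 'M[F]_2 => M a b) (hD k); rewrite !mxE.
apply/matrixP => a b; rewrite !mxE big1 // => c _.
rewrite mxE big_distrl big1 //= => d _.
exact: sT3_mul3.
Qed.

Lemma inv_crit P : matT3 P -> (forall k, Dk k P \in unitmx) -> inGL2T3 P.
Proof.
move=> hP hU.
pose Q0 : 'M['M[F]_3]_2 := \matrix_(a, b) diag_mx (\row_k (invmx (Dk k P)) a b).
have hQ0 : matT3 Q0 by move=> a b; rewrite mxE; apply: inT3_diag.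
have DQ0 : forall k, Dk k Q0 = invmx (Dk k P).
  by move=> k; apply/matrixP => a b; rewrite !mxE eqxx mulr1n.
pose n := P *m Q0 - 1.
pose n' := Q0 *m P - 1.
have hn : matT3 n by apply: matT3_add; [exact: matT3_mul | apply: matT3_opp; exact: matT3_1].
have hn' : matT3 n' by apply: matT3_add; [exact: matT3_mul | apply: matT3_opp; exact: matT3_1].
have n3 : n * n * n = 0.
  apply: nil3 => // k; rewrite Dk_add Dk_opp Dk_1 Dk_mul // DQ0 mulmxV //.
  by rewrite subrr.
have n3' : n' * n' * n' = 0.
  apply: nil3 => // k; rewrite Dk_add Dk_opp Dk_1 Dk_mul // DQ0 mulVmx //.
  by rewrite subrr.
have ePQ : P * Q0 = 1 + n by rewrite /n addrC subrK.
have eQP : Q0 * P = 1 + n' by rewrite /n' addrC subrK.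
have [r1 _] := @nil3R _ _ n3.
have [_ l1] := @nil3R _ _ n3'.
pose QR := Q0 * (1 - n + n * n).
pose QL := (1 - n' + n' * n') * Q0.
have hR : P * QR = 1 by rewrite /QR mulrA ePQ.
have hL : QL * P = 1 by rewrite /QL -mulrA eQP.
have eLR : QL = QR by rewrite -[QL]mulr1 -hR mulrA hL mul1r.
split => //; exists QR; split; last by split => //; rewrite -eLR.
apply: matT3_mul => //; apply: matT3_add; last exact: matT3_mul.
apply: matT3_add; [exact: matT3_1 | exact: matT3_opp].
Qed.

Lemma ord2 (j : 'I_2) : j = 0 \/ j = 1.
Proof. by case: j => [[|[|m]] h]; [left; apply/val_inj|right; apply/val_inj|]. Qed.

Lemma pairrowM (a b : 'M[F]_3) P :
  pairrow a b *m P = pairrow (a * P 0 0 + b * P 1 0) (a * P 0 1 + b * P 1 1).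
Proof.
have e1 : lift ord0 ord0 = 1 :> 'I_2 by apply/val_inj.
have e0 : ord0 = 0 :> 'I_2 by apply/val_inj.
apply/matrixP => i j; rewrite !mxE !big_ord_recl big_ord0 !mxE /= addr0 ?e1 ?e0.
by case: (ord2 j) => ->.
Qed.

Lemma pairrow_inj (a b c d : 'M[F]_3) : pairrow a b = pairrow c d -> a = c /\ b = d.
Proof.
move=> e; have e0 := congr1 (fun M : 'rV['M[F]_3]_2 => M 0 0) e.
have e1 := congr1 (fun M : 'rV['M[F]_3]_2 => M 0 1) e.
by move: e0 e1; rewrite /= !mxE /=.
Qed.

Lemma ideal_sub (a b c d : 'M[F]_3) P : matT3 P -> pairrow a b *m P = pairrow c d ->
  forall m, in_rideal c d m -> in_rideal a b m.
Proof.
move=> hP; rewrite pairrowM => /pairrow_inj [<- <-] m [s [t [hs [ht ->]]]].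
exists (P 0 0 * s + P 0 1 * t), (P 1 0 * s + P 1 1 * t); split.
  by apply: inT3_add; apply: inT3_mul.
split; first by apply: inT3_add; apply: inT3_mul.
by rewrite !mulrDl -!mulrA !mulrDr addrACA.
Qed.

Definition M22 (a b c d : 'M[F]_3) : 'M['M[F]_3]_2 :=
  \matrix_(i, j) if i == 0 then (if j == 0 then a else b)
                 else (if j == 0 then c else d).

Lemma M22E a b c d : let M := M22 a b c d in
  M 0 0 = a /\ M 0 1 = b /\ M 1 0 = c /\ M 1 1 = d.
Proof. by rewrite /M22 !mxE. Qed.

Lemma matT3_M22 a b c d : inT3 a -> inT3 b -> inT3 c -> inT3 d -> matT3 (M22 a b c d).
Proof.
move=> ha hb hc hd i j; rewrite mxE.
by case: (i == 0); case: (j == 0).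
Qed.
End T3.

Arguments M22 {F}.
Arguments matT3_M22 {F}.
Arguments Dk {F}.
Arguments ideal_sub {F a b c d P}.
Arguments inv_crit {F P}.

Theorem mainTheorem9 (F : fieldType) (x y w z : 'M[F]_3) :
  inT3 x -> inT3 y -> inT3 w -> inT3 z ->
  free_pair x y -> free_pair w z ->
  (same_orbit x y w z <->
   (forall m : 'M[F]_3, inT3 m -> (in_rideal x y m <-> in_rideal w z m))).
Proof.
move=> hx hy hw hz _ _; split.
  move=> [P [[hP [Q [hQ [PQ QP]]]] e]] m hm; split.
    apply: (ideal_sub hQ).
    by rewrite -e -mulmxA PQ mulmx1.
  exact: (ideal_sub hP e).
move=> H.
have rw : in_rideal w z w.
  exists 1, 0; split; first exact: inT3_1.
  by split; [exact: inT3_0 | rewrite mulr1 mulr0 addr0].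
have rz : in_rideal w z z.
  exists 0, 1; split; first exact: inT3_0.
  by split; [exact: inT3_1 | rewrite mulr1 mulr0 add0r].
have rx : in_rideal x y x.
  exists 1, 0; split; first exact: inT3_1.
  by split; [exact: inT3_0 | rewrite mulr1 mulr0 addr0].
have ry : in_rideal x y y.
  exists 0, 1; split; first exact: inT3_0.
  by split; [exact: inT3_1 | rewrite mulr1 mulr0 add0r].
have [s1 [t1 [hs1 [ht1 e1]]]] := (proj2 (H w hw) rw).
have [s2 [t2 [hs2 [ht2 e2]]]] := (proj2 (H z hz) rz).
have [s3 [t3 [hs3 [ht3 e3]]]] := (proj1 (H x hx) rx).
have [s4 [t4 [hs4 [ht4 e4]]]] := (proj1 (H y hy) ry).
pose S := M22 s1 s2 t1 t2.
pose T := M22 s3 s4 t3 t4.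
have hS : matT3 S by apply: matT3_M22.
have hT : matT3 T by apply: matT3_M22.
have eS : pairrow x y *m S = pairrow w z.
  by rewrite pairrowM /S /M22 !mxE /= -e1 -e2.
have eT : pairrow w z *m T = pairrow x y.
  by rewrite pairrowM /T /M22 !mxE /= -e3 -e4.
pose c := 1 - S *m T.
have hc : matT3 c by apply: matT3_add; [exact: matT3_1 | apply: matT3_opp; exact: matT3_mul].
have ec : pairrow x y *m c = 0.
  by rewrite /c mulmxBr mulmx1 mulmxA eS eT subrr.
have : forall k : 'I_3, exists Yk : 'M[F]_2,
    (Dk k S + (1 - Dk k S *m Dk k T) *m Yk) \in unitmx.
  move=> k; exact: sr1.
move=> /fin_all_exists [Yf hYf].
pose Y : 'M['M[F]_3]_2 := \matrix_(a, b) diag_mx (\row_k (Yf k) a b).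
have hY : matT3 Y by move=> a b; rewrite mxE; apply: inT3_diag.
have DY : forall k, Dk k Y = Yf k.
  by move=> k; apply/matrixP => a b; rewrite !mxE eqxx mulr1n.
exists (S + c *m Y); split; last first.
  by rewrite mulmxDr mulmxA ec mul0mx addr0.
apply: inv_crit.
  by apply: matT3_add => //; apply: matT3_mul.
move=> k; rewrite Dk_add Dk_mul // DY /c Dk_add Dk_opp Dk_1 Dk_mul //.
Qed.
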